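(* Let $X$ be a finite set with $|X|=n$ and let $\mathfrak{G}=\mathbf{G}_2(X)$ be the generalized Desargues configuration, with point set $\mathcal{P}_2(X)$ and lines the sets $\mathcal{P}_2(Z)$ for $3$-subsets $Z$ of $X$. For $H\subseteq\mathcal{P}_2(X)$ the following are equivalent: (a) $H$ is a hyperplane of $\mathfrak{G}$; (b) there is a nonempty proper subset $Z$ of $X$ such that $H=\mathcal{P}_2(Z)\cup\mathcal{P}_2(X\setminus Z)$. Consequently, the Veldkamp space of $\mathbf{G}_2(X)$ is the projective space $PG(n-2,2)$.
   Context: $\mathcal{P}_2(Y)$ is the set of $2$-subsets of $Y$. A subspace is a set of points containing every line meeting it in at least two points; a hyperplane is a proper subspace meeting every line. For distinct hyperplanes $H_1,H_2$ of a partial Steiner triple system with point set $S$, $H_1\pitchfork H_2:=S\setminus(H_1\triangle H_2)$; the Veldkamp space of the system is the incidence structure whose points are its hyperplanes and whose lines are the triples $\{H_1,H_2,H_1\pitchfork H_2\}$ for distinct hyperplanes $H_1,H_2$. $PG(d,2)$ denotes the $d$-dimensional projective space over the two-element field. *)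

(* Defs.v *)
From HB Require Import structures.
From mathcomp Require Import all_boot all_order all_algebra.
Set Implicit Arguments. Unset Strict Implicit. Unset Printing Implicit Defensive.
Import GRing.Theory.

Section G2.
Variable X : finType.

Definition P2 (Y : {set X}) : {set {set X}} :=
  [set A : {set X} | (A \subset Y) && (#|A| == 2)].

Definition G2pts : {set {set X}} := P2 setT.

Definition G2line (L : {set {set X}}) : Prop :=
  exists Z : {set X}, #|Z| = 3 /\ L = P2 Z.

Definition G2subspace (H : {set {set X}}) : Prop :=
  H \subset G2pts /\
  forall L, G2line L -> 2 <= #|L :&: H| -> L \subset H.

Definition G2hyperplane (H : {set {set X}}) : Prop :=
  G2subspace H /\ H != G2pts /\
  forall L, G2line L -> exists2 p, p \in L & p \in H.

Definition vtrans (H1 H2 : {set {set X}}) : {set {set X}} :=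
  G2pts :\: ((H1 :\: H2) :|: (H2 :\: H1)).

Definition veldkamp_line (L : {set {set {set X}}}) : Prop :=
  exists H1 H2, [/\ G2hyperplane H1, G2hyperplane H2, H1 != H2 &
                    L = [set H1; H2; vtrans H1 H2]].
End G2.

(* PG(d,2): points are the nonzero vectors of F_2^(d+1) (here 'rV_m, m=d+1),
   lines are the triples {u, v, u+v} with u, v distinct nonzero. *)
Definition PGline (m : nat) (L : {set 'rV['F_2]_m}) : Prop :=
  exists u v : 'rV['F_2]_m, [/\ u != 0%R, v != 0%R, u != v & L = [set u; v; (u + v)%R]].

(* The Veldkamp space of G_2(X) is isomorphic to PG(m-1,2): a bijection f
   from the hyperplanes onto the nonzero vectors of 'rV_m, such that a set
   of points is a Veldkamp line iff it consists of hyperplanes and its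
   image is a line of PG(m-1,2). *)
Definition veldkamp_iso_PG (X : finType) (m : nat)
    (f : {set {set X}} -> 'rV['F_2]_m) : Prop :=
  [/\ (forall H, G2hyperplane H -> f H != 0%R),
      (forall H1 H2, G2hyperplane H1 -> G2hyperplane H2 -> f H1 = f H2 -> H1 = H2),
      (forall v, v != 0%R -> exists2 H, G2hyperplane H & f H = v) &
      (forall L : {set {set {set X}}}, veldkamp_line L <->
         ((forall H, H \in L -> G2hyperplane H) /\ PGline (f @: L)))].

(* Main.v *)
Require Import Defs.
From HB Require Import structures.
From mathcomp Require Import all_boot all_order all_algebra.
From mathcomp Require Import zify.
Set Implicit Arguments. Unset Strict Implicit. Unset Printing Implicit Defensive.

Section S.
Variable X : finType.
Implicit Types (s : X -> bool) (H : {set {set X}}).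

Definition Hs (s : X -> bool) := P2 [set x : X | s x] :|: P2 (~: [set x : X | s x]).

Lemma pair_P2 (Y : {set X}) (x y : X) : x != y -> ([set x; y] \in P2 Y) = (x \in Y) && (y \in Y).
Proof. move=> xy; rewrite inE cards2 xy andbT subUset !sub1set. by []. Qed.

Lemma G2ptsP (p : {set X}) : reflect (exists x y, x != y /\ p = [set x; y]) (p \in G2pts X).
Proof. rewrite /G2pts inE subsetT /=. exact: cards2P. Qed.

Lemma pair_G2 (x y : X) : x != y -> [set x; y] \in G2pts X.
Proof. move=> xy; apply/G2ptsP; by exists x, y. Qed.

Lemma Hs_pair s (x y : X) : x != y -> ([set x; y] \in Hs s) = (s x == s y).
Proof. move=> xy; rewrite inE !pair_P2 // !inE. by case: (s x); case: (s y). Qed.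

Lemma Hs_sub s : Hs s \subset G2pts X.
Proof.
apply/subsetP => p; rewrite !inE subsetT /=.
by case/orP => /andP [].
Qed.

Lemma eq_G2 (A B : {set {set X}}) : A \subset G2pts X -> B \subset G2pts X ->
  (forall x y, x != y -> ([set x; y] \in A) = ([set x; y] \in B)) -> A = B.
Proof.
move=> sA sB e; apply/setP => p; apply/idP/idP => pin.
  have := subsetP sA _ pin => /G2ptsP [x [y [xy pe]]].
  by rewrite pe -e // -pe.
have := subsetP sB _ pin => /G2ptsP [x [y [xy pe]]].
by rewrite pe e // -pe.
Qed.

Lemma Hs_eq s1 s2 : s1 =1 s2 -> Hs s1 = Hs s2.
Proof.
move=> e; apply: eq_G2; try exact: Hs_sub.
by move=> x y xy; rewrite !Hs_pair // !e.
Qed.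

Lemma Hs_const s (p : {set X}) : p \in Hs s -> {in p &, forall u v, s u = s v}.
Proof.
move=> pin; have := subsetP (Hs_sub s) _ pin => /G2ptsP [x [y [xy pe]]].
move: pin; rewrite pe Hs_pair // => /eqP sxy u v.
by rewrite !inE => /orP [] /eqP -> /orP [] /eqP ->.
Qed.

Lemma in_HsP s (p : {set X}) : #|p| = 2 -> {in p &, forall u v, s u = s v} -> p \in Hs s.
Proof.
move=> /eqP /cards2P [x [y [xy pe]]] c.
rewrite pe Hs_pair //; apply/eqP; apply: c; rewrite pe !inE eqxx ?orbT //.
Qed.

Lemma card3_elems (W : {set X}) : #|W| = 3 ->
  exists x y z, [/\ x != y, x != z, y != z & [/\ x \in W, y \in W & z \in W]].
Proof.
move=> W3.
have /card_gt0P [x xW] : 0 < #|W| by rewrite W3.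
have : #|W :\ x| == 2 by move: (cardsD1 x W); rewrite W3 xW => [[->]].
case/cards2P => y [z [yz e]].
have : y \in W :\ x by rewrite e !inE eqxx.
have : z \in W :\ x by rewrite e !inE eqxx orbT.
rewrite !inE => /andP [zx zW] /andP [yx yW].
exists x, y, z; split => //; by rewrite eq_sym.
Qed.

Lemma hyp_of_s s (a b : X) : s a != s b -> G2hyperplane (Hs s).
Proof.
move=> sab.
have ab : a != b by apply: contraNneq sab => ->.
split; [split; first exact: Hs_sub|split].
- move=> L [W [W3 ->]] /card_gt1P [p [q [pin qin pq]]].
  move: pin qin; rewrite !in_setI => /andP [pL pH] /andP [qL qH].
  move: pL qL; rewrite !inE => /andP [pW p2] /andP [qW q2].
  have cp := Hs_const pH; have cq := Hs_const qH.
  have [c [cp' cq']] : exists c, c \in p /\ c \in q.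
    have h1 : #|p :|: q| <= 3 by rewrite -W3; apply: subset_leq_card; rewrite subUset pW.
    have h2 := cardsUI p q.
    have : 0 < #|p :&: q|.
      move: h1 h2; rewrite (eqP p2) (eqP q2); lia.
    by case/card_gt0P => c; rewrite inE => /andP [] ? ?; exists c.
  have sW : {in W, forall w, s w = s c}.
    move=> w wW.
    case/boolP: (w \in p) => wp; first exact: cp.
    case/boolP: (w \in q) => wq; first exact: cq.
    have D2 : #|W :\ w| = 2 by move: (cardsD1 w W); rewrite W3 wW => [[->]].
    have epq : forall r : {set X}, r \subset W -> #|r| == 2 -> w \notin r -> r = W :\ w.
      move=> r rW r2 wr; suff /eqP : r == W :\ w by [].
      by rewrite eqEcard subsetD1 rW wr D2 (eqP r2).
    by case/eqP: pq; rewrite (epq p) // (epq q).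
  apply/subsetP => r rL.
  have /andP [rW r2] : (r \subset W) && (#|r| == 2) by move: rL; rewrite inE.
  apply: in_HsP; first exact/eqP.
  move=> u v ur vr; rewrite !sW //; by apply: (subsetP rW).
- apply/eqP => e; have := pair_G2 ab; rewrite -e Hs_pair //.
  by rewrite (negbTE sab).
- move=> L [W [W3 ->]].
  have [x [y [z [xy xz yz [xW yW zW]]]]] := card3_elems W3.
  case exy: (s x == s y).
    by exists [set x; y]; rewrite ?pair_P2 ?xW ?yW // Hs_pair.
  case exz: (s x == s z).
    by exists [set x; z]; rewrite ?pair_P2 ?xW ?zW // Hs_pair.
  exists [set y; z]; rewrite ?pair_P2 ?yW ?zW // Hs_pair //.
  by move: exy exz; case: (s x); case: (s y); case: (s z).
Qed.

Lemma pair_in_line (W : {set X}) (x y : X) : x != y -> x \in W -> y \in W ->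
  [set x; y] \in P2 W.
Proof. by move=> xy xW yW; rewrite pair_P2 // xW yW. Qed.

Lemma tri H (x y z : X) : G2hyperplane H -> x != y -> x != z -> y != z ->
  ([set x; y] \in H) = (([set x; z] \in H) == ([set y; z] \in H)).
Proof.
move=> [[sub spc] [_ meet]] xy xz yz.
set W := [set x; y; z].
have W3 : #|W| = 3.
  rewrite /W setUC cardsU1 cards2 xy !inE.
  by rewrite eq_sym (negbTE xz) eq_sym (negbTE yz).
have lineL : G2line (P2 W) by exists W.
have xW : x \in W by rewrite !inE eqxx.
have yW : y \in W by rewrite !inE eqxx orbT.
have zW : z \in W by rewrite !inE eqxx !orbT.
have Lxy := pair_in_line xy xW yW.
have Lxz := pair_in_line xz xW zW.
have Lyz := pair_in_line yz yW zW.
have two : forall p q : {set X}, p \in P2 W -> q \in P2 W -> p != q -> p \in H -> q \in H ->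
    P2 W \subset H.
  move=> p q pL qL pq pH qH; apply: spc => //.
  by apply/card_gt1P; exists p, q; rewrite !in_setI pL qL pH qH.
have neq : forall a b c d : X, c \in [set a; b] = false -> [set a; b] != [set d; c].
  move=> a b c d cn; apply/eqP => e; by rewrite e !inE eqxx orbT in cn.
have n1 : [set x; y] != [set x; z] by apply: neq; rewrite !inE eq_sym (negbTE xz) eq_sym (negbTE yz).
have n2 : [set x; y] != [set y; z] by apply: neq; rewrite !inE eq_sym (negbTE xz) eq_sym (negbTE yz).
have n3 : [set x; z] != [set y; z].
  apply/eqP => e3; have : x \in [set y; z] by rewrite -e3 !inE eqxx.
  by rewrite !inE (negbTE xy) (negbTE xz).
have m : [|| [set x; y] \in H, [set x; z] \in H | [set y; z] \in H].
  have [p pL pH] := meet _ lineL.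
  move: pL; rewrite inE => /andP [pW /cards2P [u [v [uv pe]]]].
  subst p; move: pW; rewrite subUset !sub1set /W !inE.
  case/andP => /orP [/orP [] | ] /eqP eu /orP [/orP [] | ] /eqP ev; subst u v;
   first [by rewrite eqxx in uv | by rewrite pH ?orbT | by rewrite setUC in pH; rewrite pH ?orbT].
move: m.
case h1: ([set x; y] \in H); case h2: ([set x; z] \in H); case h3: ([set y; z] \in H) => //= _.
- by move/subsetP: (two _ _ Lxy Lxz n1 h1 h2) => /(_ _ Lyz); rewrite h3.
- by move/subsetP: (two _ _ Lxy Lyz n2 h1 h3) => /(_ _ Lxz); rewrite h2.
- by move/subsetP: (two _ _ Lxz Lyz n3 h2 h3) => /(_ _ Lxy); rewrite h1.
Qed.

Lemma hyp_s H : G2hyperplane H -> exists a b s, s a != s b /\ H = Hs s.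
Proof.
move=> hH; have hH' := hH; case: hH' => [[sub spc] [neq meet]].
have : ~~ (G2pts X \subset H) by apply: contra neq => s2; rewrite eqEsubset sub s2.
case/subsetPn => p /G2ptsP [a [b [ab pe]]] pH; subst p.
pose s x := (x == a) || ([set a; x] \in H).
exists a, b, s; split.
  by move: ab pH; rewrite /s eqxx eq_sym; case: (b == a); case: ([set a; b] \in H).
apply: eq_G2 => //; first exact: Hs_sub.
move=> x y xy; rewrite Hs_pair // /s.
case: (eqVneq x a) => [xa|xa]; case: (eqVneq y a) => [ya|ya].
- by subst; rewrite eqxx in xy.
- by subst x; rewrite /=; case: ([set a; y] \in H).
- by subst y; rewrite /= setUC; case: ([set a; x] \in H).
- by rewrite /= (tri hH xy xa ya) (setUC [set x]) (setUC [set y]).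
Qed.

Lemma part1 H : G2hyperplane H <->
     exists Z : {set X}, [/\ Z != set0, Z != setT & H = P2 Z :|: P2 (~: Z)].
Proof.
split.
  case/hyp_s => a [b [s [sab ->]]].
  exists [set x | s x]; split => //.
    apply/set0Pn; case sa: (s a); first by exists a; rewrite inE.
    by exists b; rewrite inE; move: sab; rewrite sa; case: (s b).
  apply/eqP => e; move: (in_setT a) (in_setT b); rewrite -e !inE.
  by move: sab; case: (s a); case: (s b).
case=> Z [Z0 ZT ->].
case/set0Pn: Z0 => a aZ.
have : ~~ (setT \subset Z) by rewrite subTset.
case/subsetPn => b _ bZ.
have -> : P2 Z :|: P2 (~: Z) = Hs (fun x => x \in Z).
  rewrite /Hs; have -> : [set x | x \in Z] = Z by apply/setP => x; rewrite inE.
  by [].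
by apply: (@hyp_of_s _ a b); rewrite aZ (negbTE bZ).
Qed.

Lemma vtrans_Hs s1 s2 : vtrans (Hs s1) (Hs s2) = Hs (fun z => s1 z (+) s2 z).
Proof.
apply: eq_G2; [exact: subsetDl | exact: Hs_sub|].
move=> x y xy; rewrite [RHS]Hs_pair // /vtrans in_setD pair_G2 // !in_setU !in_setD !Hs_pair //.
by case: (s1 x); case: (s1 y); case: (s2 x); case: (s2 y).
Qed.

Open Scope ring_scope.

Definition b2F (b : bool) : 'F_2 := b%:R.

Lemma b2F_inj a b : b2F a = b2F b -> a = b.
Proof. by case: a; case: b. Qed.

Lemma b2F_add a b : b2F (a (+) b) = b2F a + b2F b.
Proof. by case: a; case: b; rewrite /b2F /= ?addr0 ?add0r //; apply/val_inj. Qed.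

Lemma F2cases (x : 'F_2) : (x == 0) || (x == 1).
Proof. case: x => [[|[|n]]] Hn; by []. Qed.

Lemma b2F_eq1 (x : 'F_2) : b2F (x == 1) = x.
Proof. by case/orP: (F2cases x) => /eqP ->. Qed.

Lemma b2F_0 b : (b2F b == 0) = ~~ b.
Proof. by case: b. Qed.

Variable x0 : X.

Definition g H y := (y != x0) && ([set x0; y] \notin H).

Lemma g_x0 H : g H x0 = false.
Proof. by rewrite /g eqxx. Qed.

Lemma gHs s (y : X) : g (Hs s) y = (s x0 != s y).
Proof.
rewrite /g; case: (eqVneq y x0) => [->|yx]; first by rewrite eqxx.
by rewrite Hs_pair // eq_sym.
Qed.

Lemma hyp_g H : G2hyperplane H -> H = Hs (g H).
Proof.
case/hyp_s => a [b [s [_ ->]]].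
apply: eq_G2; try exact: Hs_sub.
move=> x y xy; rewrite !Hs_pair // !gHs.
by case: (s x0); case: (s x); case: (s y).
Qed.

Lemma g_inj H1 H2 : G2hyperplane H1 -> G2hyperplane H2 -> g H1 =1 g H2 -> H1 = H2.
Proof. by move=> h1 h2 e; rewrite (hyp_g h1) (hyp_g h2); apply: Hs_eq. Qed.

Definition e (i : 'I_(#|X|.-1)) : X :=
  enum_val (A := [set~ x0]) (cast_ord (esym (cardsC1 x0)) i).

Lemma e_neq i : e i != x0.
Proof. by have := enum_valP (cast_ord (esym (cardsC1 x0)) i); rewrite !inE. Qed.

Lemma e_inj : injective e.
Proof. by move=> i j /enum_val_inj /cast_ord_inj. Qed.

Lemma e_surj y : y != x0 -> exists i, e i = y.
Proof.
move=> yx; have yA : y \in [set~ x0] by rewrite !inE.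
exists (cast_ord (cardsC1 x0) (enum_rank_in yA y)).
by rewrite /e cast_ordK; apply: enum_rankK_in.
Qed.

Definition f H : 'rV['F_2]_(#|X|.-1) := \row_i b2F (g H (e i)).

Lemma f_g H1 H2 : f H1 = f H2 -> g H1 =1 g H2.
Proof.
move=> E y; case: (eqVneq y x0) => [->|yx]; first by rewrite !g_x0.
case: (e_surj yx) => i <-.
have := congr1 (fun M : 'rV_(#|X|.-1) => M 0 i) E; rewrite !mxE.
exact: b2F_inj.
Qed.

Lemma f_inj H1 H2 : G2hyperplane H1 -> G2hyperplane H2 -> f H1 = f H2 -> H1 = H2.
Proof. by move=> h1 h2 /f_g; apply: g_inj. Qed.

Lemma f_nz H : G2hyperplane H -> f H != 0.
Proof.
move=> hH; apply/eqP => E.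
have E' : f H = f (Hs (fun _ => false)) by rewrite E; apply/rowP => i; rewrite !mxE gHs.
have := f_g E'; case/hyp_s: hH => a [b [s [sab HE]]].
rewrite HE => h; have := h a; have := h b; rewrite !gHs /=.
by move: sab; case: (s a); case: (s b); case: (s x0).
Qed.

Lemma f_surj v : v != 0 -> exists2 H, G2hyperplane H & f H = v.
Proof.
move=> vn.
pose s z := [exists i, (e i == z) && (v 0 i == 1)].
have se i : s (e i) = (v 0 i == 1).
  apply/existsP/idP => [[j /andP [/eqP /e_inj -> ]] //|h].
  by exists i; rewrite eqxx h.
have sx0 : s x0 = false.
  apply/existsP => [[j /andP [/eqP ej _]]]; by move: (e_neq j); rewrite ej eqxx.
have [i vi] : exists i, v 0 i != 0.
  case/boolP: [exists i, v 0 i != 0] => [/existsP //|/existsPn h].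
  case/eqP: vn; apply/rowP => i; rewrite mxE; exact/eqP/negPn/h.
exists (Hs s).
  apply: (@hyp_of_s _ x0 (e i)); rewrite sx0 se.
  by move: vi; case/orP: (F2cases (v 0 i)) => /eqP ->.
apply/rowP => j; rewrite mxE gHs sx0 se.
by rewrite -[RHS]b2F_eq1; case: (v 0 j == 1).
Qed.

Lemma vt_hyp H1 H2 : G2hyperplane H1 -> G2hyperplane H2 -> H1 != H2 ->
  G2hyperplane (vtrans H1 H2) /\ f (vtrans H1 H2) = f H1 + f H2.
Proof.
move=> h1 h2 n12.
have [z gz] : exists z, g H1 z != g H2 z.
  case/boolP: [exists z, g H1 z != g H2 z] => [/existsP //|/existsPn h].
  by case/eqP: n12; apply: g_inj => // y; apply/eqP/negPn/h.
have -> : vtrans H1 H2 = Hs (fun y => g H1 y (+) g H2 y).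
  by rewrite {1}(hyp_g h1) {1}(hyp_g h2) vtrans_Hs.
split.
  apply: (@hyp_of_s _ x0 z); rewrite !g_x0 /=.
  by move: gz; case: (g H1 z); case: (g H2 z).
apply/rowP => j; rewrite !mxE gHs !g_x0 /= -b2F_add.
by case: (_ (+) _).
Qed.

Lemma iso : veldkamp_iso_PG f.
Proof.
split.
- exact: f_nz.
- exact: f_inj.
- exact: f_surj.
move=> L; split.
  case=> H1 [H2 [h1 h2 n12 ->]].
  have [hv fv] := vt_hyp h1 h2 n12.
  split.
    by move=> H; rewrite !inE => /orP [/orP [] |] /eqP ->.
  exists (f H1), (f H2); split; [exact: f_nz|exact: f_nz| |].
    by apply: contra n12 => /eqP /(f_inj h1 h2) ->.
  by rewrite !imsetU !imset_set1 fv.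
case=> hL [u [v [un vn uv fL]]].
have : u \in f @: L by rewrite fL !inE eqxx.
case/imsetP => H1 H1L eu; subst u.
have : v \in f @: L by rewrite fL !inE eqxx orbT.
case/imsetP => H2 H2L ev; subst v.
have h1 := hL _ H1L; have h2 := hL _ H2L.
have n12 : H1 != H2 by apply: contra uv => /eqP ->.
have [hv fv] := vt_hyp h1 h2 n12.
exists H1, H2; split => //.
apply/setP => H; apply/idP/idP => [HL|].
  have hH := hL _ HL.
  have : f H \in f @: L by apply: imset_f.
  rewrite fL !inE -fv => /orP [/orP [] |] /eqP E.
  - by rewrite (f_inj hH h1 E) eqxx.
  - by rewrite (f_inj hH h2 E) eqxx orbT.
  - by rewrite (f_inj hH hv E) eqxx !orbT.
rewrite !inE => /orP [/orP [] |] /eqP -> //.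
have : f H1 + f H2 \in f @: L by rewrite fL !inE eqxx !orbT.
case/imsetP => H3 H3L; rewrite -fv => E.
by rewrite (f_inj hv (hL _ H3L) E).
Qed.

End S.

(* n = #|X|; PG(n-2,2) is modelled on the nonzero vectors of 'rV['F_2]_(n-1). *)
Theorem theorem4p1 (X : finType) :
  (forall H : {set {set X}},
     G2hyperplane H <->
     exists Z : {set X}, [/\ Z != set0, Z != setT &
                             H = P2 Z :|: P2 (~: Z)]) /\
  exists f : {set {set X}} -> 'rV['F_2]_(#|X|.-1), veldkamp_iso_PG f.
Proof.
split; first exact: part1.
case: (pickP (fun _ : X => true)) => [x0 _|none].
  by exists (f x0); apply: iso.
have nohyp : forall H : {set {set X}}, ~ G2hyperplane H.
  by move=> H /hyp_s [a _]; have := none a.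
have c0 : #|X| = 0%N by apply: eq_card0 => x; by have := none x.
have z0 : forall v : 'rV['F_2]_(#|X|.-1), v = 0%R.
  move=> v; apply/rowP => i; exfalso; have := ltn_ord i; move: (nat_of_ord i) => k; by rewrite c0.
exists (fun _ => 0%R); split.
- by move=> H /nohyp.
- by move=> H1 H2 /nohyp.
- by move=> v; rewrite (z0 v) eqxx.
move=> L; split.
  by case=> H1 [H2 [/nohyp]].
by case=> _ [u [v [un]]]; rewrite (z0 u) eqxx in un.
Qed.
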